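(* Let $R$ be a commutative ring, $I=(f_1,\dots,f_r)$, $\mathfrak a=(a_1,\dots,a_s)\subseteq I$, $g=\operatorname{grade}(I)$, and $\Phi=(c_{ij})$ an $r\times s$ matrix with $a_j=\sum_i c_{ij}f_i$. With $\Gamma_\bullet$ and $\tilde H_\bullet$ as in the context, $$\operatorname{Kitt}(\mathfrak a,I)=\mathfrak a+\langle\Gamma_\bullet\cdot\tilde H_\bullet\rangle_r=\mathfrak a+\sum_{i=\max\{0,r-s\}}^{r-g}\Gamma_{r-i}\cdot\tilde H_i .$$
   Context: $K_\bullet=K_\bullet(\mathbf f;R)$ is the Koszul DG algebra: exterior algebra over $R$ on $e_1,\dots,e_r$ with $\partial(e_i)=f_i$. Set $\zeta_j=\sum_i c_{ij}e_i$, let $\Gamma_\bullet$ be the $R$-subalgebra generated by $\zeta_1,\dots,\zeta_s$ and $Z_\bullet$ the subalgebra of Koszul cycles. $\tilde H_\bullet$ is the $R$-subalgebra of $K_\bullet$ generated by (cycle) representatives of the Koszul homology classes of $H_\bullet(\mathbf f;R)$, $\tilde H_i$ its degree-$i$ part. For graded subsets $A_\bullet,B_\bullet$ of $K_\bullet$, $\langle A_\bullet\cdot B_\bullet\rangle_r$ (resp. $A_j\cdot B_{r-j}$) is the $R$-span in $K_r$ of products $x\wedge y$ with $x\in A_j, y\in B_{r-j}$ (all $j$, resp. fixed $j$), identified with an ideal of $R$ via $K_r=Re_1\wedge\cdots\wedge e_r\cong R$. $\operatorname{Kitt}(\mathfrak a,I):=\langle\Gamma_\bullet\cdot Z_\bullet\rangle_r$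 (this ideal does not depend on the choice of generators or of $\Phi$). *)

(* Defs.v *)
From mathcomp Require Import all_boot all_order all_algebra.
Set Implicit Arguments. Unset Strict Implicit. Unset Printing Implicit Defensive.
Import GRing.Theory.
Local Open Scope ring_scope.

Section Koszul.
Variables (R : comPzRingType) (r : nat).

(* The exterior algebra K = /\ R^r : coefficient functions on the basis
   e_S = e_{s_1} /\ ... /\ e_{s_k}  (s_1 < ... < s_k, S = {s_1,...,s_k}). *)
Local Notation KA := {ffun {set 'I_r} -> R}.

Definition kinv (S T : {set 'I_r}) : nat :=
  #|[set p : 'I_r * 'I_r | (p.1 \in S) && (p.2 \in T) && (p.2 < p.1)%N]|.

(* e_S /\ e_T = (-1)^{kinv S T} e_{S u T} if S, T disjoint, 0 otherwise *)
Definition kwedge (x y : KA) : KA :=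
  [ffun U : {set 'I_r} => \sum_(S : {set 'I_r}) \sum_(T : {set 'I_r})
     if (S :|: T == U) && [disjoint S & T]
     then (-1) ^+ kinv S T * x S * y T else 0].

Definition kbasis (S : {set 'I_r}) : KA := [ffun U : {set 'I_r} => (U == S)%:R].
Definition kone : KA := kbasis set0.
Definition kscale (c : R) (x : KA) : KA := [ffun U : {set 'I_r} => c * x U].

(* Koszul differential: d(e_S) = sum_{i in S} (-1)^{#{j in S, j < i}} f_i e_{S\i} *)
Definition kdiff (f : 'I_r -> R) (x : KA) : KA :=
  [ffun U : {set 'I_r} => \sum_(i : 'I_r | i \notin U)
     (-1) ^+ #|[set j in U | (j < i)%N]| * f i * x (i |: U)].

Definition homog (k : nat) (x : KA) : Prop :=
  forall S : {set 'I_r}, #|S| != k -> x S = 0.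

Inductive gen_alg (G : KA -> Prop) : KA -> Prop :=
  | ga_gen x : G x -> gen_alg G x
  | ga_one : gen_alg G kone
  | ga_add x y : gen_alg G x -> gen_alg G y -> gen_alg G (x + y)
  | ga_scale (c : R) x : gen_alg G x -> gen_alg G (kscale c x)
  | ga_mul x y : gen_alg G x -> gen_alg G y -> gen_alg G (kwedge x y).

Definition gen_alg_deg (G : KA -> Prop) (k : nat) (x : KA) : Prop :=
  gen_alg G x /\ homog k x.

Definition kcycle (f : 'I_r -> R) (k : nat) (x : KA) : Prop :=
  homog k x /\ kdiff f x = 0.

Definition kzeta (s : nat) (c : 'M[R]_(r, s)) (j : 'I_s) : KA :=
  \sum_(i : 'I_r) kscale (c i j) (kbasis [set i]).

Definition Gam (s : nat) (c : 'M[R]_(r, s)) (k : nat) : KA -> Prop :=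
  gen_alg_deg (fun x => exists j, x = kzeta c j) k.

(* T is a set of (homogeneous) cycle representatives of the Koszul homology
   classes: each element is a homogeneous cycle, and every homology class of
   every degree has a representative in T. *)
Definition cycle_reps (f : 'I_r -> R) (T : KA -> Prop) : Prop :=
  (forall t, T t -> exists k, kcycle f k t) /\
  (forall k z, kcycle f k z ->
     exists t y, T t /\ homog k t /\ homog k.+1 y /\ z - t = kdiff f y).

Definition Htil (T : KA -> Prop) (k : nat) : KA -> Prop := gen_alg_deg T k.

(* coefficient of e_1 /\ ... /\ e_r, identifying K_r with R *)
Definition ktop (x : KA) : R := x [set: 'I_r].

End Koszul.

Notation KA R r := {ffun {set 'I_r} -> R}.

Definition spanR (R : comPzRingType) (P : R -> Prop) (x : R) : Prop :=
  exists (n : nat) (cf v : 'I_n -> R),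
    (forall k, P (v k)) /\ x = \sum_(k < n) cf k * v k.

Definition ideal_sum (R : comPzRingType) (P Q : R -> Prop) (x : R) : Prop :=
  exists y z, P y /\ Q z /\ x = y + z.

(* <A . B>_r = R-span in K_r = R of products x /\ y, x in A_j, y in B_{r-j} *)
Definition prod_ideal (R : comPzRingType) (r : nat) (A B : nat -> KA R r -> Prop)
  (x : R) : Prop :=
  spanR (fun y => exists (j : nat) (u w : KA R r),
           (j <= r)%N /\ A j u /\ B (r - j)%N w /\ y = ktop (kwedge u w)) x.

Definition prod_ideal_range (R : comPzRingType) (r : nat)
  (A B : nat -> KA R r -> Prop) (lo hi : nat) (x : R) : Prop :=
  spanR (fun y => exists (i : nat) (u w : KA R r),
           (lo <= i <= hi)%N /\ (i <= r)%N /\ A (r - i)%N u /\ B i w /\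
           y = ktop (kwedge u w)) x.

Definition Kitt (R : comPzRingType) (r s : nat) (f : 'I_r -> R) (c : 'M[R]_(r, s))
  : R -> Prop := prod_ideal (Gam c) (kcycle f).

Definition ideal_gen (R : comPzRingType) (xs : seq R) : R -> Prop :=
  spanR (fun v => v \in xs).

Definition Rregular (R : comPzRingType) (xs : seq R) : Prop :=
  (forall k, (k < size xs)%N -> forall y,
     ideal_gen (take k xs) (nth 0 xs k * y) -> ideal_gen (take k xs) y) /\
  ~ ideal_gen xs 1.

Definition is_grade (R : comPzRingType) (I : R -> Prop) (g : nat) : Prop :=
  (exists xs : seq R, size xs = g /\ Rregular xs /\ (forall x, x \in xs -> I x)) /\
  (forall xs : seq R, Rregular xs -> (forall x, x \in xs -> I x) -> (size xs <= g)%N).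

(* Main.v *)
Require Import Defs.
From mathcomp Require Import all_boot all_order all_algebra.
From mathcomp Require Import ring zify.
Set Implicit Arguments. Unset Strict Implicit. Unset Printing Implicit Defensive.
Import GRing.Theory.
Local Open Scope ring_scope.
Section K.
Variables (R : comPzRingType) (r : nat).
Local Notation KA := {ffun {set 'I_r} -> R}.
Local Notation kb := (kbasis R).
Local Notation k1 := (kone R r).
Implicit Types (x y z : KA) (S T U : {set 'I_r}).
Implicit Types (i k : 'I_r).

Lemma kscaleE c x S : kscale c x S = c * x S. Proof. by rewrite ffunE. Qed.
Lemma kbasisE S U : kb S U = (U == S)%:R. Proof. by rewrite ffunE. Qed.

Lemma kscaleDr c x y : kscale c (x + y) = kscale c x + kscale c y.
Proof. by apply/ffunP => U; rewrite !ffunE mulrDr. Qed.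
Lemma kscaleDl c d x : kscale (c + d) x = kscale c x + kscale d x.
Proof. by apply/ffunP => U; rewrite !ffunE mulrDl. Qed.
Lemma kscaleA c d x : kscale c (kscale d x) = kscale (c * d) x.
Proof. by apply/ffunP => U; rewrite !ffunE mulrA. Qed.
Lemma kscale1 x : kscale 1 x = x.
Proof. by apply/ffunP => U; rewrite !ffunE mul1r. Qed.
Lemma kscale0 x : kscale 0 x = 0.
Proof. by apply/ffunP => U; rewrite !ffunE mul0r. Qed.
Lemma kscaler0 c : kscale c (0 : KA) = 0.
Proof. by apply/ffunP => U; rewrite !ffunE mulr0. Qed.
Lemma kscaleNr c x : kscale c (- x) = - kscale c x.
Proof. by apply/ffunP => U; rewrite !ffunE mulrN. Qed.
Lemma kscaleNl c x : kscale (- c) x = - kscale c x.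
Proof. by apply/ffunP => U; rewrite !ffunE mulNr. Qed.
Lemma kscaleBr c x y : kscale c (x - y) = kscale c x - kscale c y.
Proof. by rewrite kscaleDr kscaleNr. Qed.
Lemma kscaleN1 x : kscale (-1) x = - x.
Proof. by rewrite kscaleNl kscale1. Qed.
Lemma kscale_sumr I (s : seq I) (P : pred I) (F : I -> KA) c :
  kscale c (\sum_(i <- s | P i) F i) = \sum_(i <- s | P i) kscale c (F i).
Proof.
apply/ffunP => U; rewrite ffunE !sum_ffunE mulr_sumr.
by apply: eq_bigr => i _; rewrite ffunE.
Qed.
Lemma kscale_suml I (s : seq I) (P : pred I) (F : I -> R) x :
  kscale (\sum_(i <- s | P i) F i) x = \sum_(i <- s | P i) kscale (F i) x.
Proof.
apply/ffunP => U; rewrite ffunE !sum_ffunE mulr_suml.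
by apply: eq_bigr => i _; rewrite ffunE.
Qed.

Definition klin (L : KA -> KA) :=
  (forall x y, L (x + y) = L x + L y) /\ (forall c x, L (kscale c x) = kscale c (L x)).

Lemma klin0 L : klin L -> L 0 = 0.
Proof. rewrite /klin => -[_ HZ]; by have := HZ 0 0; rewrite !kscale0. Qed.
Lemma klin_sum L I (s : seq I) (P : pred I) (F : I -> KA) : klin L ->
  L (\sum_(i <- s | P i) F i) = \sum_(i <- s | P i) L (F i).
Proof.
move=> HL; have H0 := klin0 HL; case: HL => HD _.
by apply: (big_morph L HD H0).
Qed.
Lemma klinN L x : klin L -> L (- x) = - L x.
Proof. by move=> HL; rewrite -kscaleN1 HL.2 kscaleN1. Qed.
Lemma klinB L x y : klin L -> L (x - y) = L x - L y.
Proof. by move=> HL; rewrite HL.1 klinN. Qed.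

Lemma kexpand x : x = \sum_S kscale (x S) (kb S).
Proof.
apply/ffunP => U; rewrite sum_ffunE (bigD1 U) //= big1 ?addr0.
  by rewrite !ffunE eqxx mulr1.
by move=> S /negbTE nSU; rewrite !ffunE eq_sym nSU mulr0.
Qed.

Lemma lin_ext L1 L2 : klin L1 -> klin L2 ->
  (forall S, L1 (kb S) = L2 (kb S)) -> forall x, L1 x = L2 x.
Proof.
move=> H1 H2 HB x; rewrite (kexpand x) (klin_sum _ _ _ H1) (klin_sum _ _ _ H2).
by apply: eq_bigr => S _; rewrite H1.2 H2.2 HB.
Qed.

Lemma klin_id : klin id. Proof. by []. Qed.

Lemma kwedgeE x y U : kwedge x y U = \sum_S \sum_T
     (if (S :|: T == U) && [disjoint S & T]
     then (-1) ^+ kinv S T * x S * y T else 0).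
Proof. by rewrite ffunE. Qed.

Lemma kwedgeDl x y z : kwedge (x + y) z = kwedge x z + kwedge y z.
Proof.
apply/ffunP => U; rewrite !ffunE -big_split; apply: eq_bigr => S _.
rewrite -big_split; apply: eq_bigr => T _; rewrite ffunE.
by case: ifP => _ /=; rewrite ?addr0 // ?ffunE; ring.
Qed.
Lemma kwedgeDr x y z : kwedge x (y + z) = kwedge x y + kwedge x z.
Proof.
apply/ffunP => U; rewrite !ffunE -big_split; apply: eq_bigr => S _.
rewrite -big_split; apply: eq_bigr => T _; rewrite ffunE.
by case: ifP => _ /=; rewrite ?addr0 // ?ffunE; ring.
Qed.
Lemma kwedgeZl c x y : kwedge (kscale c x) y = kscale c (kwedge x y).
Proof.
apply/ffunP => U; rewrite !ffunE mulr_sumr; apply: eq_bigr => S _.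
rewrite mulr_sumr; apply: eq_bigr => T _; rewrite ffunE.
by case: ifP => _; rewrite ?mulr0 //; ring.
Qed.
Lemma kwedgeZr c x y : kwedge x (kscale c y) = kscale c (kwedge x y).
Proof.
apply/ffunP => U; rewrite !ffunE mulr_sumr; apply: eq_bigr => S _.
rewrite mulr_sumr; apply: eq_bigr => T _; rewrite ffunE.
by case: ifP => _; rewrite ?mulr0 //; ring.
Qed.
Lemma klin_wl y : klin (fun x => kwedge x y).
Proof. by split=> *; rewrite ?kwedgeDl ?kwedgeZl. Qed.
Lemma klin_wr x : klin (fun y => kwedge x y).
Proof. by split=> *; rewrite ?kwedgeDr ?kwedgeZr. Qed.
Lemma kwedge0l y : kwedge 0 y = 0. Proof. exact: (klin0 (klin_wl y)). Qed.
Lemma kwedge0r x : kwedge x 0 = 0. Proof. exact: (klin0 (klin_wr x)). Qed.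
Lemma kwedgeNl x y : kwedge (- x) y = - kwedge x y.
Proof. exact: (klinN _ (klin_wl y)). Qed.
Lemma kwedgeNr x y : kwedge x (- y) = - kwedge x y.
Proof. exact: (klinN _ (klin_wr x)). Qed.
Lemma kwedgeBl x y z : kwedge (x - y) z = kwedge x z - kwedge y z.
Proof. exact: (klinB _ _ (klin_wl z)). Qed.
Lemma kwedgeBr x y z : kwedge x (y - z) = kwedge x y - kwedge x z.
Proof. exact: (klinB _ _ (klin_wr x)). Qed.

Lemma klin_comp L1 L2 : klin L1 -> klin L2 -> klin (fun x => L1 (L2 x)).
Proof. by move=> H1 H2; split=> *; rewrite ?H2.1 ?H2.2 ?H1.1 ?H1.2. Qed.
Lemma klin_add L1 L2 : klin L1 -> klin L2 -> klin (fun x => L1 x + L2 x).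
Proof.
move=> H1 H2; split=> *; rewrite ?H2.1 ?H2.2 ?H1.1 ?H1.2 ?kscaleDr //.
by rewrite addrACA.
Qed.

Lemma sum_delta (F : {set 'I_r} -> R) U : \sum_S (S == U)%:R * F S = F U.
Proof.
rewrite (bigD1 U) //= eqxx mul1r big1 ?addr0 // => S /negbTE ->.
by rewrite mul0r.
Qed.

Definition sg n : R := (-1) ^+ n.

Lemma wedge_basis S T : kwedge (kb S) (kb T) =
  if [disjoint S & T] then kscale (sg (kinv S T)) (kb (S :|: T)) else 0.
Proof.
apply/ffunP => U; rewrite ffunE.
under eq_bigr => S' _ do under eq_bigr => T' _ do rewrite !kbasisE.
transitivity (\sum_S' (S' == S)%:R * \sum_T' (T' == T)%:R *
   (if (S' :|: T' == U) && [disjoint S' & T'] then sg (kinv S' T') else 0)).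
  apply: eq_bigr => S' _; rewrite mulr_sumr; apply: eq_bigr => T' _.
  by case: ifP => _; rewrite ?mulr0 // /sg; ring.
rewrite sum_delta sum_delta.
case: (boolP [disjoint S & T]) => Hd; rewrite ?andbT ?andbF /= ?ffunE //.
by rewrite eq_sym; case: (U == S :|: T); rewrite ?mulr1 ?mulr0.
Qed.

Lemma kinvE S T : kinv S T = (\sum_(a in S) \sum_(b in T) (b < a)%N)%N.
Proof.
rewrite /kinv -sum1_card big_mkcond /=.
transitivity (\sum_a \sum_b (((a \in S) && (b \in T) && (b < a)%N) : nat))%N.
  rewrite pair_big /=; apply: eq_big => // p _; rewrite inE.
  by case: (_ && _).
rewrite [RHS]big_mkcond; apply: eq_bigr => a _; case: (a \in S) => /=.
  by rewrite [RHS]big_mkcond; apply: eq_bigr => b _; case: (b \in T).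
by rewrite big1.
Qed.

Definition n_lt T (i : 'I_r) : nat := (\sum_(b in T) (b < i)%N)%N.

Lemma card_lt U (i : 'I_r) : #|[set j in U | (j < i)%N]| = n_lt U i.
Proof.
rewrite -sum1_card /n_lt big_mkcond [RHS]big_mkcond; apply: eq_bigr => j _.
by rewrite !inE; case: (j \in U); case: (j < i)%N.
Qed.

Lemma kinv1l i T : kinv [set i] T = n_lt T i.
Proof. by rewrite kinvE big_set1. Qed.
Lemma kinv11 i k : kinv [set i] [set k] = (k < i)%N.
Proof. by rewrite kinv1l /n_lt big_set1. Qed.
Lemma kinv0l T : kinv set0 T = 0%N.
Proof. by rewrite kinvE big_set0. Qed.
Lemma kinv0r T : kinv T set0 = 0%N.
Proof. by rewrite kinvE big1 // => a _; rewrite big_set0. Qed.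

Lemma sum_setU (F : 'I_r -> nat) (A B : {set 'I_r}) : [disjoint A & B] ->
  (\sum_(i in A :|: B) F i = \sum_(i in A) F i + \sum_(i in B) F i)%N.
Proof. by move=> d; rewrite -bigU //; apply: eq_bigl => i; rewrite !inE. Qed.

Lemma kinvUr S T U : [disjoint T & U] -> kinv S (T :|: U) = (kinv S T + kinv S U)%N.
Proof.
by move=> d; rewrite !kinvE -big_split; apply: eq_bigr => a _; rewrite sum_setU.
Qed.
Lemma kinvUl S T U : [disjoint S & T] -> kinv (S :|: T) U = (kinv S U + kinv T U)%N.
Proof. by move=> d; rewrite !kinvE sum_setU. Qed.

Lemma n_ltU1 i T k : i \notin T -> n_lt (i |: T) k = ((i < k)%N + n_lt T k)%N.
Proof. by move=> iT; rewrite /n_lt big_setU1. Qed.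
Lemma n_ltD1 k T i : k \in T -> n_lt T i = ((k < i)%N + n_lt (T :\ k) i)%N.
Proof. by move=> kT; rewrite -{1}(setD1K kT) n_ltU1 // setD11. Qed.

Lemma disjUl S T U : [disjoint S :|: T & U] = [disjoint S & U] && [disjoint T & U].
Proof. by rewrite -!setI_eq0 setIUl setU_eq0. Qed.
Lemma disjUr S T U : [disjoint S & T :|: U] = [disjoint S & T] && [disjoint S & U].
Proof. by rewrite -!setI_eq0 setIUr setU_eq0. Qed.

Lemma sgD m n : sg (m + n) = sg m * sg n. Proof. by rewrite /sg exprD. Qed.
Lemma sgS n : sg n.+1 = - sg n. Proof. by rewrite /sg exprS mulN1r. Qed.
Lemma sg0 : sg 0 = 1. Proof. by []. Qed.
Lemma sgsq n : sg n * sg n = 1.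
Proof. by rewrite -sgD addnn /sg -signr_odd odd_double. Qed.

Lemma k1E : k1 = kb set0. Proof. by []. Qed.

Lemma wedge_1l x : kwedge k1 x = x.
Proof.
apply: (@lin_ext (fun x => kwedge k1 x) id (klin_wr _) klin_id) => T.
rewrite k1E wedge_basis -setI_eq0 set0I eqxx kinv0l sg0 set0U.
by rewrite kscale1.
Qed.
Lemma wedge_1r x : kwedge x k1 = x.
Proof.
apply: (@lin_ext (fun x => kwedge x k1) id (klin_wl _) klin_id) => T.
rewrite k1E wedge_basis -setI_eq0 setI0 eqxx kinv0r sg0 setU0.
by rewrite kscale1.
Qed.

Lemma wedgeA_basis S T U :
  kwedge (kwedge (kb S) (kb T)) (kb U) = kwedge (kb S) (kwedge (kb T) (kb U)).
Proof.
rewrite !wedge_basis.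
case dST: [disjoint S & T]; case dTU: [disjoint T & U];
rewrite ?kwedge0l ?kwedge0r ?kwedgeZl ?kwedgeZr ?wedge_basis ?disjUl ?disjUr
  ?dST ?dTU ?andbF ?andbT /= ?kscaler0 //;
case dSU: [disjoint S & U]; rewrite ?kscaler0 // !kscaleA setUA.
by rewrite kinvUl // kinvUr // !sgD; congr kscale; ring.
Qed.

Lemma kwedgeA x y z : kwedge (kwedge x y) z = kwedge x (kwedge y z).
Proof.
move: x; apply: (@lin_ext (fun x => kwedge (kwedge x y) z)
   (fun x => kwedge x (kwedge y z)) (klin_comp (klin_wl z) (klin_wl y))
   (klin_wl _)) => S.
move: y; apply: (@lin_ext (fun y => kwedge (kwedge (kb S) y) z)
   (fun y => kwedge (kb S) (kwedge y z)) (klin_comp (klin_wl z) (klin_wr _))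
   (klin_comp (klin_wr _) (klin_wl z))) => T.
move: z; apply: (@lin_ext (fun z => kwedge (kwedge (kb S) (kb T)) z)
   (fun z => kwedge (kb S) (kwedge (kb T) z)) (klin_wr _)
   (klin_comp (klin_wr _) (klin_wr _))) => U.
exact: wedgeA_basis.
Qed.

Lemma sum_antisym (A : finType) (F : A -> A -> R) :
  (forall a, F a a = 0) -> (forall a b, F a b = - F b a) ->
  \sum_a \sum_b F a b = 0.
Proof.
move=> F0 FA.
pose G a b := if (enum_rank a < enum_rank b)%N then F a b else 0.
have E : forall a b, F a b = G a b - G b a.
  move=> a b; rewrite /G; case: ltngtP => H.
  - by rewrite subr0.
  - by rewrite sub0r -FA.
  - have ab : a = b by apply: enum_rank_inj; apply: val_inj.
    by rewrite ab F0 subrr.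
under eq_bigr => a _ do under eq_bigr => b _ do rewrite E.
under eq_bigr => a _ do rewrite sumrB.
by rewrite sumrB [X in _ - X]exchange_big subrr.
Qed.

Lemma homog1_sq (v : KA) : homog 1 v -> kwedge v v = 0.
Proof.
move=> hv; apply/ffunP => U; rewrite kwedgeE ffunE.
apply: sum_antisym => [S|S T].
  case: ifP => // /andP[_ dSS].
  have -> : v S = 0.
    apply: hv; move: dSS; rewrite -setI_eq0 setIid => /eqP ->.
    by rewrite cards0.
  by rewrite !mulr0.
case: (boolP (#|S| == 1%N)) => hS; last first.
  by rewrite (hv S hS); do 2 case: ifP => _; rewrite ?mulr0 ?mul0r ?oppr0.
case: (boolP (#|T| == 1%N)) => hT; last first.
  by rewrite (hv T hT); do 2 case: ifP => _; rewrite ?mulr0 ?mul0r ?oppr0.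
move/cards1P: hS => [i ->]; move/cards1P: hT => [k ->].
rewrite setUC disjoint_sym.
case: ifP => [/andP[_ d]|_]; last by rewrite oppr0.
rewrite !kinv11.
have ik : i != k by move: d; rewrite disjoints1 inE eq_sym.
have : ((k < i)%N + (i < k)%N = 1)%N.
  by move: ik; rewrite -(inj_eq val_inj) /=; case: (ltngtP k i).
case: (k < i)%N; case: (i < k)%N => //= _; rewrite ?expr1 ?expr0; ring.
Qed.
End K.

Section K.
Variables (R : comPzRingType) (r : nat).
Local Notation KA := {ffun {set 'I_r} -> R}.
Local Notation kb := (kbasis R).
Local Notation k1 := (kone R r).
Local Notation sg := (@sg R).
Local Notation klin := (@klin R r).
Implicit Types (x y z : KA) (S T U : {set 'I_r}).
Implicit Types (i k : 'I_r).

Lemma klin_scale c : klin (kscale c).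
Proof. by split=> *; rewrite ?kscaleDr ?kscaleA // mulrC. Qed.
Lemma klin_sub L1 L2 : klin L1 -> klin L2 -> klin (fun x => L1 x - L2 x).
Proof.
move=> H1 H2; split=> *; rewrite ?H2.1 ?H2.2 ?H1.1 ?H1.2 ?kscaleBr //.
by rewrite opprD addrACA.
Qed.
Lemma klin_zero : klin (fun _ => 0).
Proof. by split=> *; rewrite ?addr0 ?kscaler0. Qed.

Section Diff.
Variable f : 'I_r -> R.

Lemma kdiffE x U : kdiff f x U =
  \sum_(i | i \notin U) sg (n_lt U i) * f i * x (i |: U).
Proof. by rewrite ffunE; apply: eq_bigr => i _; rewrite card_lt. Qed.

Lemma klin_d : klin (kdiff f).
Proof.
split=> [x y|c x]; apply/ffunP => U; rewrite !ffunE.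
  by rewrite -big_split; apply: eq_bigr => i _; rewrite ffunE mulrDr.
by rewrite mulr_sumr; apply: eq_bigr => i _; rewrite ffunE; ring.
Qed.

Lemma diff_basis S : kdiff f (kb S) =
  \sum_(i in S) kscale (sg (n_lt S i) * f i) (kb (S :\ i)).
Proof.
apply/ffunP => U; rewrite kdiffE sum_ffunE.
rewrite big_mkcond [RHS]big_mkcond; apply: eq_bigr => i _.
rewrite kbasisE ffunE kbasisE.
case: (boolP (i \in S)) => iS; last first.
  case: ifP => // _; case: eqP => [E|_]; last by rewrite mulr0.
  by move: iS; rewrite -E setU11.
case: (boolP (i \in U)) => iU /=.
  case: eqP => [E|_]; last by rewrite mulr0.
  by move: iU; rewrite E setD11.
case: (U =P S :\ i) => [E|NE].
  by rewrite E setD1K // eqxx [n_lt S i](n_ltD1 _ iS) ltnn add0n.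
rewrite mulr0; case: eqP => [E'|]; last by rewrite mulr0.
by case: NE; rewrite -E' setU1K.
Qed.


Lemma d_one : kdiff f k1 = 0.
Proof. by rewrite k1E diff_basis big_set0. Qed.

Lemma d_e1 i : kdiff f (kb [set i]) = kscale (f i) k1.
Proof.
rewrite diff_basis big_set1 /n_lt big_set1 ltnn sg0 mul1r setDv.
by [].
Qed.
Lemma setU1D1 i k T : i != k -> (i |: T) :\ k = i |: (T :\ k).
Proof.
move=> ik; apply/setP => j; rewrite !inE.
case: (j =P k) => [->|_] /=; last by [].
by rewrite eq_sym (negbTE ik).
Qed.
Lemma sgab i k : i != k -> sg (k < i)%N * sg (i < k)%N = -1.
Proof.
move=> ik; have : ((k < i)%N + (i < k)%N = 1)%N.
  by move: ik; rewrite -(inj_eq val_inj) /=; case: (ltngtP k i).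
by case: (k < i)%N; case: (i < k)%N => // _; rewrite /sg /= ?expr0 ?expr1 ?mulr1 ?mul1r.
Qed.
Lemma leib1_basis i T : kdiff f (kwedge (kb [set i]) (kb T)) =
  kscale (f i) (kb T) - kwedge (kb [set i]) (kdiff f (kb T)).
Proof.
rewrite wedge_basis disjoints1 diff_basis (klin_sum _ _ _ (klin_wr _)).
under eq_bigr => k kT do rewrite kwedgeZr wedge_basis disjoints1 in_setD1.
case: (boolP (i \in T)) => iT /=.
  rewrite (klin0 klin_d) (bigD1 i) //= eqxx /= big1 ?addr0; last first.
    by move=> k /andP[_ ki]; rewrite eq_sym ki /= kscaler0.
  rewrite kscaleA kinv1l setD1K // [n_lt T i](n_ltD1 _ iT) ltnn add0n.
  by rewrite mulrAC sgsq mul1r subrr.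
under eq_bigr => k _ do rewrite andbF /=.
rewrite klin_d.2 diff_basis big_setU1 //= kscaleDr kscaleA.
rewrite [n_lt (i |: T) i](n_ltU1 _ iT) ltnn add0n setU1K // kinv1l mulrA sgsq mul1r.
congr (_ + _).
rewrite kscale_sumr -sumrN; apply: eq_bigr => k kT.
have ik : i != k by apply: contraNneq iT => ->.
rewrite kscaleA kscaleA -kscaleNl setU1D1 // kinv1l; congr kscale.
rewrite (n_ltU1 _ iT) [n_lt T i](n_ltD1 _ kT) !sgD.
by rewrite -[RHS]mulN1r -(sgab ik); ring.
Qed.
Lemma leib1 i y : kdiff f (kwedge (kb [set i]) y) =
  kscale (f i) y - kwedge (kb [set i]) (kdiff f y).
Proof.
move: y; apply: (@lin_ext R r (fun y => kdiff f (kwedge (kb [set i]) y))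
  (fun y => kscale (f i) y - kwedge (kb [set i]) (kdiff f y))
  (klin_comp klin_d (klin_wr _))
  (klin_sub (klin_scale _) (klin_comp (klin_wr _) klin_d))).
exact: leib1_basis.
Qed.
End Diff.

Definition ksig x : KA := [ffun S : {set 'I_r} => sg #|S| * x S].

Lemma klin_sig : klin ksig.
Proof.
split=> [x y|c x]; apply/ffunP => U; rewrite !ffunE; first by rewrite mulrDr.
by rewrite mulrCA.
Qed.

Lemma sig_basis S : ksig (kb S) = kscale (sg #|S|) (kb S).
Proof.
apply/ffunP => U; rewrite !ffunE; case: (U =P S) => [->|_] //.
by rewrite !mulr0.
Qed.

Lemma sig_homog (k : nat) x : homog k x -> ksig x = kscale (sg k) x.
Proof.
move=> hx; apply/ffunP => U; rewrite !ffunE.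
case: (boolP (#|U| == k)) => [/eqP -> //|hU].
by rewrite (hx U hU) !mulr0.
Qed.

Lemma klin_opp L : klin L -> klin (fun x => - L x).
Proof. by move=> H; split=> *; rewrite ?H.1 ?H.2 ?opprD ?kscaleNr. Qed.

Lemma sig_e1 i w : ksig (kwedge (kb [set i]) w) = - kwedge (kb [set i]) (ksig w).
Proof.
move: w; apply: (@lin_ext R r (fun w => ksig (kwedge (kb [set i]) w))
  (fun w => - kwedge (kb [set i]) (ksig w))
  (klin_comp klin_sig (klin_wr _))
  (klin_opp (klin_comp (klin_wr _) klin_sig))) => T.
rewrite sig_basis kwedgeZr wedge_basis disjoints1.
case: (boolP (i \in T)) => iT /=; first by rewrite kscaler0 (klin0 klin_sig) oppr0.
rewrite klin_sig.2 sig_basis !kscaleA -kscaleNl cardsU1 iT /= add1n sgS.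
by congr kscale; ring.
Qed.
Lemma e_split S i : i \in S ->
  kb S = kscale (sg (kinv [set i] (S :\ i))) (kwedge (kb [set i]) (kb (S :\ i))).
Proof. by move=> iS; rewrite wedge_basis disjoints1 setD11 /= kscaleA sgsq kscale1 setD1K. Qed.

Section Diff2.
Variable f : 'I_r -> R.

Lemma leib_basis n : forall S, #|S| = n -> forall y,
  kdiff f (kwedge (kb S) y) =
  kwedge (kdiff f (kb S)) y + kwedge (ksig (kb S)) (kdiff f y).
Proof.
elim: n => [|n IH] S hS y.
  rewrite (cards0_eq hS) -k1E wedge_1l d_one kwedge0l add0r sig_basis cards0 sg0.
  by rewrite kscale1 wedge_1l.
have /card_gt0P [i iS] : (0 < #|S|)%N by rewrite hS.
have hS' : #|S :\ i| = n by move: hS; rewrite (cardsD1 i S) iS add1n => -[].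
rewrite (e_split iS).
set c := sg _.
rewrite kwedgeZl (klin_d f).2 kwedgeA leib1 IH //.
rewrite (klin_d f).2 leib1 klin_sig.2 sig_e1.
rewrite !kwedgeZl kwedgeBl kwedgeNl kwedgeZl !kwedgeA kwedgeDr.
by rewrite -kscaleDr opprD addrA.
Qed.

Lemma leib x y : kdiff f (kwedge x y) =
  kwedge (kdiff f x) y + kwedge (ksig x) (kdiff f y).
Proof.
move: x; apply: (@lin_ext R r (fun x => kdiff f (kwedge x y))
  (fun x => kwedge (kdiff f x) y + kwedge (ksig x) (kdiff f y))
  (klin_comp (klin_d f) (klin_wl y))
  (klin_add (klin_comp (klin_wl y) (klin_d f)) (klin_comp (klin_wl _) klin_sig))).
by move=> S; apply: (leib_basis (erefl _)).
Qed.

Lemma dd_basis n : forall S, #|S| = n -> kdiff f (kdiff f (kb S)) = 0.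
Proof.
elim: n => [|n IH] S hS.
  by rewrite (cards0_eq hS) -k1E d_one (klin0 (klin_d f)).
have /card_gt0P [i iS] : (0 < #|S|)%N by rewrite hS.
have hS' : #|S :\ i| = n by move: hS; rewrite (cardsD1 i S) iS add1n => -[].
rewrite (e_split iS) (klin_d f).2 leib1 (klin_d f).2 (klinB _ _ (klin_d f)) (klin_d f).2 leib1.
by rewrite IH // kwedge0r subr0 subrr kscaler0.
Qed.

Lemma dd x : kdiff f (kdiff f x) = 0.
Proof.
move: x; apply: (@lin_ext R r (fun x => kdiff f (kdiff f x)) (fun _ => 0)
  (klin_comp (klin_d f) (klin_d f)) klin_zero).
by move=> S; apply: (dd_basis (erefl _)).
Qed.
End Diff2.
End K.

Section K.
Variables (R : comPzRingType) (r : nat).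
Local Notation KA := {ffun {set 'I_r} -> R}.
Local Notation kb := (kbasis R).
Local Notation k1 := (kone R r).
Local Notation sg := (@sg R).
Local Notation klin := (@klin R r).
Local Notation ksig := (@ksig R r).
Implicit Types (x y z : KA) (S T U : {set 'I_r}).
Lemma homog0 k : homog k (0 : KA). Proof. by move=> S _; rewrite ffunE. Qed.
Lemma homogD k x y : homog k x -> homog k y -> homog k (x + y).
Proof. by move=> hx hy S hS; rewrite ffunE hx // hy // addr0. Qed.
Lemma homogZ k c x : homog k x -> homog k (kscale c x).
Proof. by move=> hx S hS; rewrite ffunE hx // mulr0. Qed.
Lemma homog_sum k I (s : seq I) (P : pred I) (F : I -> KA) :
  (forall i, P i -> homog k (F i)) -> homog k (\sum_(i <- s | P i) F i).
Proof.
move=> H; apply: (big_ind (homog k)) => //; [exact: homog0 | exact: homogD].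
Qed.
Lemma homog_basis S : homog #|S| (kb S).
Proof. by move=> U hU; rewrite kbasisE; case: eqP => [E|_] //; move: hU; rewrite E eqxx. Qed.
Lemma homog_wedge m n x y : homog m x -> homog n y -> homog (m + n) (kwedge x y).
Proof.
move=> hx hy U hU; rewrite kwedgeE big1 // => S _; rewrite big1 // => T _.
case: ifP => // /andP[/eqP hST d].
case: (boolP (#|S| == m)) => [/eqP hSm|hSm]; last by rewrite (hx S hSm) mulr0 mul0r.
case: (boolP (#|T| == n)) => [/eqP hTn|hTn]; last by rewrite (hy T hTn) mulr0.
move: hU; rewrite -hST cardsU; move: d; rewrite -setI_eq0 => /eqP ->.
by rewrite cards0 subn0 hSm hTn eqxx.
Qed.
Lemma homog_diff f k x : homog k x -> homog k.-1 (kdiff f x).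
Proof.
move=> hx U hU; rewrite kdiffE big1 // => i iU.
rewrite hx ?mulr0 //; rewrite cardsU1 iU add1n.
by apply: contra hU => /eqP <-.
Qed.
Lemma homog_gt k x : homog k x -> (r < k)%N -> x = 0.
Proof.
move=> hx hk; apply/ffunP => S; rewrite ffunE; apply: hx.
apply/eqP => E; have := max_card (mem S); rewrite card_ord.
by rewrite [X in (X <= _)%N]E leqNgt hk.
Qed.

Lemma ktop_diff f x : ktop (kdiff f x) = 0.
Proof. by rewrite /ktop kdiffE big1 // => i; rewrite in_setT. Qed.
Lemma ktopD x y : ktop (x + y) = ktop x + ktop y.
Proof. by rewrite /ktop ffunE. Qed.
Lemma ktopZ c x : ktop (kscale c x) = c * ktop x.
Proof. by rewrite /ktop ffunE. Qed.
Lemma ktopN x : ktop (- x) = - ktop x.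
Proof. by rewrite /ktop ffunE. Qed.
Lemma ktop0 : ktop (0 : KA) = 0.
Proof. by rewrite /ktop ffunE. Qed.

Definition isIdeal (J : R -> Prop) :=
  J 0 /\ (forall a b, J a -> J b -> J (a + b)) /\ (forall c a, J a -> J (c * a)).

Lemma ideal_big J I (s : seq I) (P : pred I) (F : I -> R) : isIdeal J ->
  (forall i, P i -> J (F i)) -> J (\sum_(i <- s | P i) F i).
Proof. by move=> [J0 [JD _]] H; apply: big_ind. Qed.
Lemma idealN J a : isIdeal J -> J a -> J (- a).
Proof. by move=> [_ [_ JM]] Ja; rewrite -mulN1r; apply: JM. Qed.
Lemma idealB J a b : isIdeal J -> J a -> J b -> J (a - b).
Proof. by move=> HJ Ja Jb; apply: HJ.2.1 => //; apply: idealN. Qed.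
Lemma idealMr J a c : isIdeal J -> J a -> J (a * c).
Proof. by move=> HJ Ja; rewrite mulrC; apply: HJ.2.2. Qed.

Lemma spanR_gen (P : R -> Prop) a : P a -> spanR P a.
Proof.
move=> Pa; exists 1%N, (fun _ => 1), (fun _ => a); split => //.
by rewrite big_ord1 mul1r.
Qed.

Lemma spanR_ideal (P : R -> Prop) : isIdeal (spanR P).
Proof.
split; first by exists 0%N, (fun _ => 0), (fun _ => 0); split=> [[]//|]; rewrite big_ord0.
split.
  move=> a b [n [cf [v [Hv ->]]]] [m [cf' [v' [Hv' ->]]]].
  exists (n + m)%N, (fun k => match split k with inl a => cf a | inr b => cf' b end),
    (fun k => match split k with inl a => v a | inr b => v' b end).
  split; first by move=> k; case: (split k).
  rewrite big_split_ord /=; congr (_ + _); apply: eq_bigr => k _.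
    by rewrite (unsplitK (inl k)).
  by rewrite (unsplitK (inr k)).
move=> c a [n [cf [v [Hv ->]]]]; exists n, (fun k => c * cf k), v; split => //.
by rewrite mulr_sumr; apply: eq_bigr => k _; rewrite mulrA.
Qed.

Lemma spanR_min (P Q : R -> Prop) a : isIdeal Q -> (forall b, P b -> Q b) ->
  spanR P a -> Q a.
Proof.
move=> HQ PQ [n [cf [v [Hv ->]]]]; apply: ideal_big => // k _.
by apply: HQ.2.2; apply: PQ.
Qed.

Lemma ideal_sum_ideal (J1 J2 : R -> Prop) : isIdeal J1 -> isIdeal J2 ->
  isIdeal (ideal_sum J1 J2).
Proof.
move=> H1 H2; split; first by exists 0, 0; split; [exact: H1.1|split; [exact: H2.1|by rewrite addr0]].
split.
  move=> a b [y1 [z1 [Hy1 [Hz1 ->]]]] [y2 [z2 [Hy2 [Hz2 ->]]]].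
  exists (y1 + y2), (z1 + z2); split; first by apply: H1.2.1.
  by split; [apply: H2.2.1|rewrite addrACA].
move=> c a [y [z [Hy [Hz ->]]]]; exists (c * y), (c * z).
by split; [apply: H1.2.2|split; [apply: H2.2.2|rewrite mulrDr]].
Qed.

Lemma ideal_sum_l (J1 J2 : R -> Prop) a : isIdeal J2 -> J1 a -> ideal_sum J1 J2 a.
Proof. by move=> H2 Ha; exists a, 0; rewrite addr0; split=> //; split=> //; apply: H2.1. Qed.
Lemma ideal_sum_r (J1 J2 : R -> Prop) a : isIdeal J1 -> J2 a -> ideal_sum J1 J2 a.
Proof. by move=> H1 Ha; exists 0, a; rewrite add0r; split=> //; apply: H1.1. Qed.

Definition Jcoef (J : R -> Prop) x := forall S, J (x S).

Section JC.
Variables (J : R -> Prop) (HJ : isIdeal J).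
Lemma Jcoef0 : Jcoef J 0. Proof. by move=> S; rewrite ffunE; apply: HJ.1. Qed.
Lemma JcoefD x y : Jcoef J x -> Jcoef J y -> Jcoef J (x + y).
Proof. by move=> hx hy S; rewrite ffunE; apply: HJ.2.1. Qed.
Lemma JcoefN x : Jcoef J x -> Jcoef J (- x).
Proof. by move=> hx S; rewrite ffunE; apply: idealN. Qed.
Lemma JcoefB x y : Jcoef J x -> Jcoef J y -> Jcoef J (x - y).
Proof. by move=> hx hy; apply: JcoefD => //; apply: JcoefN. Qed.
Lemma JcoefZ c x : Jcoef J x -> Jcoef J (kscale c x).
Proof. by move=> hx S; rewrite ffunE; apply: HJ.2.2. Qed.
Lemma Jcoef_wl x y : Jcoef J x -> Jcoef J (kwedge x y).
Proof.
move=> hx U; rewrite kwedgeE; apply: ideal_big => // S _; apply: ideal_big => // T _.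
case: ifP => _; last exact: HJ.1.
by rewrite mulrAC; apply: HJ.2.2.
Qed.
Lemma Jcoef_wr x y : Jcoef J y -> Jcoef J (kwedge x y).
Proof.
move=> hy U; rewrite kwedgeE; apply: ideal_big => // S _; apply: ideal_big => // T _.
case: ifP => _; last exact: HJ.1.
by apply: HJ.2.2.
Qed.
Lemma Jcoef_diff f x : Jcoef J x -> Jcoef J (kdiff f x).
Proof.
move=> hx U; rewrite kdiffE; apply: ideal_big => // i _.
by apply: HJ.2.2.
Qed.
End JC.

Lemma gen_cycle f (G : KA -> Prop) : (forall t, G t -> kdiff f t = 0) ->
  forall x, gen_alg G x -> kdiff f x = 0.
Proof.
move=> HG x; elim => {x} [t Gt|| x y _ hx _ hy| c x _ hx| x y _ hx _ hy].
- exact: HG.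
- exact: d_one.
- by rewrite (klin_d f).1 hx hy addr0.
- by rewrite (klin_d f).2 hx kscaler0.
- by rewrite leib hx hy kwedge0l kwedge0r addr0.
Qed.

Section Zeta.
Variables (s : nat) (c : 'M[R]_(r, s)).
Local Notation zeta := (kzeta c).
Definition zgen (x : KA) := exists j, x = zeta j.

Lemma d_zeta f (a : 'I_s -> R) (Hac : forall j : 'I_s, a j = \sum_(i < r) c i j * f i) j :
  kdiff f (zeta j) = kscale (a j) k1.
Proof.
rewrite /kzeta (klin_sum _ _ _ (klin_d f)).
under eq_bigr do rewrite (klin_d f).2 d_e1 kscaleA.
by rewrite -kscale_suml -Hac.
Qed.

Lemma homog_zeta j : homog 1 (zeta j).
Proof.
apply: homog_sum => i _; apply: homogZ.
by have := (@homog_basis [set i]); rewrite cards1.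
Qed.

Lemma gen_dzeta f (a : 'I_s -> R) (Hac : forall j : 'I_s, a j = \sum_(i < r) c i j * f i) :
  forall x, gen_alg zgen x -> Jcoef (spanR (fun v => exists j, v = a j)) (kdiff f x).
Proof.
have HI := spanR_ideal (fun v => exists j, v = a j).
move=> x; elim => {x} [t [j ->]|| x y _ hx _ hy| d x _ hx| x y _ hx _ hy].
- rewrite (d_zeta Hac) => S; rewrite ffunE; apply: idealMr => //.
  by apply: spanR_gen; exists j.
- by rewrite d_one; apply: Jcoef0.
- by rewrite (klin_d f).1; apply: JcoefD.
- by rewrite (klin_d f).2; apply: JcoefZ.
- by rewrite leib; apply: JcoefD => //; [apply: Jcoef_wl|apply: Jcoef_wr].
Qed.

Definition Pz (l : seq 'I_s) : KA := foldr (fun j acc => kwedge (zeta j) acc) k1 l.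

Lemma Pz_cat l1 l2 : kwedge (Pz l1) (Pz l2) = Pz (l1 ++ l2).
Proof. by elim: l1 => [|j l IH] /=; [exact: wedge_1l | rewrite kwedgeA IH]. Qed.

Lemma Pz_homog l : homog (size l) (Pz l).
Proof.
elim: l => [|j l IH] /=.
  by rewrite k1E; have := (@homog_basis set0); rewrite cards0.
exact: (homog_wedge (homog_zeta j) IH).
Qed.

Lemma zeta_sq j : kwedge (zeta j) (zeta j) = 0.
Proof. exact: (homog1_sq (homog_zeta j)). Qed.

Lemma zeta_anti j k : kwedge (zeta j) (zeta k) = - kwedge (zeta k) (zeta j).
Proof.
have := homog1_sq (homogD (homog_zeta j) (homog_zeta k)).
rewrite kwedgeDl !kwedgeDr !zeta_sq add0r addr0 => /eqP.
by rewrite addr_eq0 => /eqP.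
Qed.

Lemma zeta_swap j k y : kwedge (zeta j) (kwedge (zeta k) y) =
  - kwedge (zeta k) (kwedge (zeta j) y).
Proof. by rewrite -!kwedgeA zeta_anti kwedgeNl. Qed.

Lemma Pz_dup j l : j \in l -> kwedge (zeta j) (Pz l) = 0.
Proof.
elim: l => [|k l IH] //=; rewrite in_cons => /orP [/eqP ->|jl].
  by rewrite -kwedgeA zeta_sq kwedge0l.
by rewrite zeta_swap IH // kwedge0r oppr0.
Qed.

Lemma Pz_nuniq l : ~~ uniq l -> Pz l = 0.
Proof.
elim: l => [|j l IH] //=; rewrite negb_and negbK => /orP [jl|nu].
  exact: Pz_dup.
by rewrite IH // kwedge0r.
Qed.

Lemma gen_rep x : gen_alg zgen x ->
  exists ps : seq (R * seq 'I_s), x = \sum_(p <- ps) kscale p.1 (Pz p.2).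
Proof.
elim => {x} [t [j ->]|| x y _ [ps1 ->] _ [ps2 ->]| d x _ [ps ->]| x y _ [ps1 ->] _ [ps2 ->]].
- by exists [:: (1, [:: j])]; rewrite big_seq1 kscale1 /= wedge_1r.
- by exists [:: (1, [::])]; rewrite big_seq1 kscale1.
- by exists (ps1 ++ ps2); rewrite big_cat.
- exists [seq (d * p.1, p.2) | p <- ps]; rewrite big_map kscale_sumr.
  by apply: eq_bigr => p _; rewrite kscaleA.
- exists [seq (p.1 * q.1, p.2 ++ q.2) | p <- ps1, q <- ps2].
  rewrite big_allpairs_dep (klin_sum _ _ _ (klin_wl _)); apply: eq_bigr => p _.
  rewrite (klin_sum _ _ _ (klin_wr _)); apply: eq_bigr => q _.
  by rewrite kwedgeZl kwedgeZr Pz_cat kscaleA.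
Qed.

Lemma Gam_vanish k x : (s < k)%N -> Gam c k x -> x = 0.
Proof.
move=> hk [gx hx]; have [ps E] := gen_rep gx.
apply/ffunP => S; rewrite [RHS]ffunE.
case: (boolP (#|S| == k)) => hS; last exact: hx.
rewrite E sum_ffunE big1 // => p _; rewrite ffunE.
case: (boolP (uniq p.2)) => u; last by rewrite Pz_nuniq // ffunE mulr0.
have hp : (size p.2 <= s)%N.
  by move/card_uniqP: u => <-; rewrite -[X in (_ <= X)%N]card_ord; apply: max_card.
rewrite (@Pz_homog p.2) ?mulr0 //.
by rewrite (eqP hS); apply/eqP => E'; move: hk; rewrite E' ltnNge hp.
Qed.
End Zeta.

Lemma top_boundary f (J : R -> Prop) (HJ : isIdeal J) j u y :
  homog j u -> Jcoef J (kdiff f u) -> J (ktop (kwedge u (kdiff f y))).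
Proof.
move=> hu hdu.
have := ktop_diff f (kwedge u y); rewrite leib ktopD (sig_homog hu) kwedgeZl ktopZ.
move/eqP; rewrite addr_eq0 => /eqP H.
have -> : ktop (kwedge u (kdiff f y)) = sg j * - ktop (kwedge (kdiff f u) y).
  by rewrite H opprK mulrA sgsq mul1r.
by apply: HJ.2.2; apply: idealN => //; apply: Jcoef_wl.
Qed.

Lemma beta_exists (f : 'I_r -> R) (a0 : R) : spanR (fun v => exists i, v = f i) a0 ->
  exists b, homog 1 b /\ kdiff f b = kscale a0 k1.
Proof.
apply: (spanR_min (Q := fun a0 => exists b, homog 1 b /\ kdiff f b = kscale a0 k1)).
  split; first by exists 0; split; [exact: homog0 | by rewrite (klin0 (klin_d f)) kscale0].
  split.
    move=> a b [b1 [h1 d1]] [b2 [h2 d2]]; exists (b1 + b2).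
    by split; [exact: homogD | by rewrite (klin_d f).1 d1 d2 kscaleDl].
  move=> d a [b1 [h1 d1]]; exists (kscale d b1).
  by split; [exact: homogZ | by rewrite (klin_d f).2 d1 kscaleA].
move=> v [i ->]; exists (kb [set i]); split; last exact: d_e1.
by have := @homog_basis [set i]; rewrite cards1.
Qed.

Lemma ideal_gen_nil (y : R) : ideal_gen [::] y -> y = 0.
Proof. by move=> [n [cf [v [Hv ->]]]]; apply: big1 => k _; have := Hv k. Qed.

Lemma ideal_gen_sub (xs : seq R) m : (m < size xs)%N -> forall y : R,
  ideal_gen (take m xs) y -> ideal_gen (take m.+1 xs) y.
Proof.
move=> hm y; apply: spanR_min; first exact: spanR_ideal.
by move=> v hv; apply: spanR_gen; rewrite (take_nth (0 : R) hm) mem_rcons in_cons hv orbT.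
Qed.

Lemma ideal_gen_x (xs : seq R) m : (m < size xs)%N ->
  ideal_gen (take m.+1 xs) (nth 0 xs m).
Proof.
by move=> hm; apply: spanR_gen; rewrite (take_nth (0 : R) hm) mem_rcons in_cons eqxx.
Qed.

Lemma ideal_gen_split (xs : seq R) m : (m < size xs)%N -> forall y : R,
  ideal_gen (take m.+1 xs) y -> exists h, ideal_gen (take m xs) (y - nth 0 xs m * h).
Proof.
move=> hm y; have HI := spanR_ideal (fun v => v \in take m xs).
apply: (spanR_min (Q := fun y : R => exists h, ideal_gen (take m xs) (y - nth 0 xs m * h))).
  split; first by exists 0; rewrite mulr0 subr0; exact: HI.1.
  split.
    move=> a b [h1 H1] [h2 H2]; exists (h1 + h2).
    by rewrite mulrDr opprD addrACA; apply: HI.2.1.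
  move=> d a [h H]; exists (d * h).
  have -> : d * a - nth 0 xs m * (d * h) = d * (a - nth 0 xs m * h) by ring.
  exact: HI.2.2.
move=> v; rewrite (take_nth (0 : R) hm) mem_rcons in_cons => /orP [/eqP ->|hv].
  by exists 1; rewrite mulr1 subrr; exact: HI.1.
by exists 0; rewrite mulr0 subr0; exact: spanR_gen.
Qed.

Lemma kB_E x y S : (x - y) S = x S - y S.
Proof. by rewrite !ffunE. Qed.

Lemma depth_aux (f : 'I_r -> R) (xs : seq R) :
  (forall k, (k < size xs)%N -> forall y : R,
     ideal_gen (take k xs) (nth 0 xs k * y) -> ideal_gen (take k xs) y) ->
  (forall a0 : R, a0 \in xs -> spanR (fun v => exists i, v = f i) a0) ->
  forall n m, (m + n)%N = size xs -> forall i z, (r < i + n)%N -> homog i z ->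
  Jcoef (ideal_gen (take m xs)) (kdiff f z) ->
  exists p, Jcoef (ideal_gen (take m xs)) (z - kdiff f p).
Proof.
move=> Hreg HI n; elim: n => [|n IH] m Hmn i z Hi Hz Hdz.
  have z0 : z = 0 by apply: (homog_gt Hz); rewrite -(addn0 i).
  exists 0; rewrite z0 (klin0 (klin_d f)) subr0.
  by apply: Jcoef0; apply: spanR_ideal.
have hm : (m < size xs)%N by rewrite -Hmn addnS ltnS leq_addr.
set x := nth 0 xs m.
have [b [hb db]] : exists b, homog 1 b /\ kdiff f b = kscale x k1.
  by apply: beta_exists; apply: HI; apply: mem_nth.
set w := kwedge b z.
have hw : homog (1 + i) w := homog_wedge hb Hz.
have sg1 : sg 1 = -1 by rewrite /sg expr1.
have dw : kdiff f w = kscale x z - kwedge b (kdiff f z).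
  by rewrite /w leib db kwedgeZl wedge_1l (sig_homog hb) kwedgeZl sg1 kscaleN1.
have HJ := spanR_ideal (fun v => v \in take m xs).
have HJ' := spanR_ideal (fun v => v \in take m.+1 xs).
have Hdw : Jcoef (ideal_gen (take m.+1 xs)) (kdiff f w).
  rewrite dw; apply: JcoefB => //.
    by move=> S; rewrite ffunE; apply: idealMr => //; apply: ideal_gen_x.
  by apply: Jcoef_wr => // S; apply: ideal_gen_sub => //; exact: Hdz.
have Hmn' : (m.+1 + n)%N = size xs by rewrite addSnnS.
have Hi' : (r < 1 + i + n)%N by rewrite add1n addSn -addnS.
have [p Hp] := IH m.+1 Hmn' (1 + i) w Hi' hw Hdw.
have [q qE] : exists q, q = w - kdiff f p by exists (w - kdiff f p).
rewrite -qE in Hp.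
have : forall S, exists h, ideal_gen (take m xs) (q S - x * h).
  by move=> S; apply: ideal_gen_split => //; exact: Hp S.
case/fin_all_exists => h Hh.
pose hv : KA := [ffun S => h S].
exists hv.
have Hq : Jcoef (ideal_gen (take m xs)) (q - kscale x hv).
  by move=> S; rewrite kB_E kscaleE /hv ffunE; exact: Hh S.
have key : kscale x (z - kdiff f hv) =
    kdiff f (q - kscale x hv) + kwedge b (kdiff f z).
  rewrite (klinB _ _ (klin_d f)) (klin_d f).2 qE (klinB _ _ (klin_d f)) dd subr0 dw.
  by rewrite kscaleBr addrAC subrK.
move=> S; apply: Hreg => //.
have := JcoefD HJ (Jcoef_diff HJ f Hq) (Jcoef_wr HJ b Hdz) S.
by rewrite -key ffunE.
Qed.
End K.

Theorem theorem4p22 (R : comPzRingType) (r s : nat) (f : 'I_r -> R)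
  (a : 'I_s -> R) (c : 'M[R]_(r, s)) (g : nat)
  (Hac : forall j : 'I_s, a j = \sum_(i < r) c i j * f i)
  (Hg : is_grade (spanR (fun v => exists i, v = f i)) g)
  (T : KA R r -> Prop) (HT : cycle_reps f T) :
  let aI := spanR (fun v => exists j, v = a j) in
  (forall x, Kitt f c x <-> ideal_sum aI (prod_ideal (Gam c) (Htil T)) x) /\
  (forall x, Kitt f c x <->
     ideal_sum aI (prod_ideal_range (Gam c) (Htil T) (r - s) (r - g)) x).
Proof.
move=> aI.
have HaI : isIdeal aI := spanR_ideal _.
have HK : isIdeal (Kitt f c) := spanR_ideal _.
have HPI : isIdeal (prod_ideal (Gam c) (Htil T)) := spanR_ideal _.
have HPR : isIdeal (prod_ideal_range (Gam c) (Htil T) (r - s) (r - g)) :=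
  spanR_ideal _.
have HS1 := ideal_sum_ideal HaI HPI.
have HS2 := ideal_sum_ideal HaI HPR.
have Tcyc : forall t, T t -> kdiff f t = 0.
  by move=> t /(HT.1) [k [_ ->]].
have Hcyc : forall k w, Htil T k w -> kcycle f k w.
  by move=> k w [gw hw]; split=> //; apply: (gen_cycle Tcyc).
have Hdgam : forall j u, Gam c j u -> Jcoef aI (kdiff f u).
  by move=> j u [gu _]; apply: (gen_dzeta Hac).
have sum_sub : forall (B Q : R -> Prop), isIdeal Q -> (forall x, aI x -> Q x) ->
    (forall x, B x -> Q x) -> forall x, ideal_sum aI B x -> Q x.
  move=> B Q HQ H1 H2 x [y [z [Hy [Hz ->]]]].
  by apply: HQ.2.1; [apply: H1|apply: H2].
have aK : forall x, aI x -> Kitt f c x.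
  move=> x; apply: (spanR_min (Q := Kitt f c)) => // v [j ->].
  pose w := kdiff f (kbasis R [set: 'I_r]).
  have E : a j = ktop (kwedge (kzeta c j) w).
    have := ktop_diff f (kwedge (kzeta c j) (kbasis R [set: 'I_r])).
    rewrite leib (d_zeta Hac) kwedgeZl wedge_1l (sig_homog (homog_zeta c j)).
    rewrite kwedgeZl ktopD !ktopZ /ktop kbasisE eqxx mulr1 /sg expr1 mulN1r.
    by move/eqP; rewrite subr_eq0 => /eqP.
  case: (ltnP 0 r) => hr.
    apply: spanR_gen; exists 1%N, (kzeta c j), w; split=> //.
    split; first by split; [apply: ga_gen; exists j | exact: homog_zeta].
    split=> //; split; last exact: dd.
    have := homog_diff f (@homog_basis R r [set: 'I_r]).
    by rewrite cardsT card_ord subn1.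
  rewrite E (homog_gt (homog_zeta c j)) ?kwedge0l ?ktop0; first exact: HK.1.
  by rewrite ltnS.
have gen_in : forall j u z, (j <= r)%N -> Gam c j u -> kcycle f (r - j) z ->
    ideal_sum aI (prod_ideal (Gam c) (Htil T)) (ktop (kwedge u z)).
  move=> j u z hj hu [hz dz].
  have [t [y [Tt [ht [hy E]]]]] := HT.2 _ _ (conj hz dz).
  have -> : z = t + kdiff f y by rewrite -E addrC subrK.
  rewrite kwedgeDr ktopD; apply: HS1.2.1.
    apply: ideal_sum_r => //; apply: spanR_gen; exists j, u, t.
    by split=> //; split=> //; split=> //; split=> //; apply: ga_gen.
  apply: ideal_sum_l => //.
  exact: (top_boundary HaI y (proj2 hu) (Hdgam _ _ hu)).
have K_sub1 : forall x, Kitt f c x ->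
    ideal_sum aI (prod_ideal (Gam c) (Htil T)) x.
  move=> x; apply: (spanR_min (Q := ideal_sum aI (prod_ideal (Gam c) (Htil T)))) => // v [j [u [z [hj [hu [hz ->]]]]]].
  exact: (gen_in _ _ _ hj hu hz).
have P_sub_K : forall x, prod_ideal (Gam c) (Htil T) x -> Kitt f c x.
  move=> x; apply: (spanR_min (Q := Kitt f c)) => // v [j [u [w [hj [hu [hw ->]]]]]].
  apply: spanR_gen; exists j, u, w; split=> //; split=> //; split=> //.
  exact: Hcyc.
split.
  move=> x; split; first exact: K_sub1.
  exact: sum_sub HK aK P_sub_K x.
have R_sub_K : forall x,
    prod_ideal_range (Gam c) (Htil T) (r - s) (r - g) x -> Kitt f c x.
  move=> x; apply: (spanR_min (Q := Kitt f c)) => // v [i [u [w [hi [hir [hu [hw ->]]]]]]].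
  apply: spanR_gen; exists (r - i)%N, u, w; split; first exact: leq_subr.
  split=> //; split=> //; rewrite subKn //; exact: Hcyc.
have P_sub_R : forall x, prod_ideal (Gam c) (Htil T) x ->
    ideal_sum aI (prod_ideal_range (Gam c) (Htil T) (r - s) (r - g)) x.
  move=> x; apply: (spanR_min (Q := ideal_sum aI (prod_ideal_range (Gam c) (Htil T) (r - s) (r - g)))) => // v [j [u [w [hj [hu [hw ->]]]]]].
  case: (ltnP s j) => hsj.
    by rewrite (Gam_vanish hsj hu) kwedge0l ktop0; exact: HS2.1.
  case: (ltnP r (r - j + g)) => hg.
    have [xs [hsz [[Hreg _] HI]]] := Hg.1.
    have Hdw : Jcoef (ideal_gen (take 0 xs)) (kdiff f w).
      by rewrite (Hcyc _ _ hw).2; apply: Jcoef0; apply: spanR_ideal.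
    have H0 : (0 + g)%N = size xs by rewrite add0n hsz.
    have [p Hp] := @depth_aux R r f xs Hreg HI g 0%N H0 (r - j)%N w hg (proj2 hw) Hdw.
    have wE : w = kdiff f p.
      apply/eqP; rewrite -subr_eq0; apply/eqP/ffunP => S; rewrite [RHS]ffunE.
      by apply: ideal_gen_nil; rewrite -(take0 xs); exact: Hp S.
    rewrite wE; apply: ideal_sum_l => //.
    exact: (top_boundary HaI p (proj2 hu) (Hdgam _ _ hu)).
  apply: ideal_sum_r => //; apply: spanR_gen; exists (r - j)%N, u, w.
  split; first by apply/andP; split; [exact: leq_sub2l | lia].
  split; first exact: leq_subr.
  by split; [rewrite subKn | split].
move=> x; split.
  move/K_sub1; apply: sum_sub => //; first by move=> y Hy; apply: ideal_sum_l.
exact: sum_sub HK aK R_sub_K x.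
Qed.
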